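(* Consider the setting described in the context and assume $D>2$. For $t\ge 1$ define $\mathcal{I}_0(t)=\bigcup_{m=0}^{t-1}\mathcal{F}_0(m)$, $\mathcal{I}_1(t)=\Big(\bigcup_{m=0}^{t-1}\mathcal{F}_{D-1}(m)\Big)\setminus \mathcal{I}_0(t)$ and $\mathcal{I}_2(t)=V\setminus(\mathcal{I}_0(t)\cup\mathcal{I}_1(t))$. Then for every $t\ge1$, $$\sum_{i\in\mathcal{I}_0(t)}\ \sum_{j\in C_i(t)\cap\mathcal{I}_2(t)} a_j(t-1)\le N.$$
   Context: $G=(V,E)$ is a finite connected undirected graph with node set $V=\{0,\dots,N-1\}$; $\mathcal{N}(i)$ denotes the set of neighbours of $i$. Every edge has length $1$, $d_{ij}$ is the hop distance between $i$ and $j$, and $\mathcal{F}_k(m)=\{i\in V : d_{ik}=m\}$. Every node carries value $v_i=1$. The source set is $S(t)=\{D-1\}$ for $t\le 0$ and $S(t)=\{0\}$ for $t\ge 1$. The integer $D$ satisfies $\max_{i\in V}d_{i0}=D-1$, and nodes are labelled so that $0,1,\dots,D-1$ is a path in which node $i$ is a neighbour of $i+1$ with $d_{0,i}=i$ for $0\le i\le D-1$. The algorithm updates, for $t\ge1$: $\hat d_i(t)=0$ if $i\in S(t)$, and $\hat d_i(t)=\min_{j\in\mathcal{N}(i)}\{\hat d_j(t-1)+1\}$ otherwise; $c_i(t)=i$ if $i\in S(t)$, and otherwise $c_i(t)$ is a minimizer $j\in\mathcal{N}(i)$ of $\hat d_j(t-1)+1$; $C_i(t)=\{j : c_j(t-1)=i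 \text{ and } \hat d_j(t-1)=\hat d_i(t)+1\}$; $a_i(t)=\sum_{j\in C_i(t)}a_j(t-1)+v_i$. Initial values $(\hat d_i(0),c_i(0),a_i(0))$ are steady-state values of these recursions when the source set is constantly $\{D-1\}$; in particular $\hat d_i(0)=m$ for all $i\in\mathcal{F}_{D-1}(m)$, and for every integer $m$, $\sum_{i\in\mathcal{F}_{D-1}(m)}a_i(0)\le N$. *)

(* Defs.v *)
From mathcomp Require Import all_boot.
Set Implicit Arguments. Unset Strict Implicit. Unset Printing Implicit Defensive.

Fixpoint nball (T : finType) (e : rel T) (i : T) (n : nat) : {set T} :=
  match n with
  | 0 => [set i]
  | n'.+1 => nball e i n' :|: [set y | [exists x in nball e i n', e x y]]
  end.

(* hop distance: least n with j in the n-ball of i (searched over n < #|T|,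
   which suffices in a connected graph; every edge has length 1) *)
Definition hopdist (T : finType) (e : rel T) (i j : T) : nat :=
  find (fun n => j \in nball e i n) (iota 0 #|T|).

Definition level (T : finType) (e : rel T) (k : T) (m : nat) : {set T} :=
  [set i | hopdist e i k == m].

Definition childset (N : nat) (cprev : 'I_N -> 'I_N) (dprev : 'I_N -> nat)
  (dnow_i : nat) (i : 'I_N) : {set 'I_N} :=
  [set j | (cprev j == i) && (dprev j == dnow_i + 1)].

(* Main.v *)
Require Import Defs.
From mathcomp Require Import all_boot.
From mathcomp Require Import zify.


Section Ball.
Variables (T : finType) (e : rel T).

Lemma ball_self x n : x \in nball e x n.
Proof. elim: n => [|n IH] /=; first by rewrite set11. by rewrite in_setU IH. Qed.

Lemma ball_cons x x' y n : e x x' -> y \in nball e x' n -> y \in nball e x n.+1.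
Proof.
move=> exx'; elim: n y => [|n IH] y /=.
  rewrite in_set1 => /eqP ->; rewrite in_setU; apply/orP; right.
  by rewrite inE; apply/existsP; exists x; rewrite set11.
rewrite in_setU => /orP [/IH h|]; first by rewrite in_setU h.
rewrite inE => /existsP [w /andP [hw ewy]].
rewrite in_setU; apply/orP; right; rewrite inE; apply/existsP; exists w.
by rewrite (IH _ hw).
Qed.

Lemma ball_decons x y n : y \in nball e x n.+1 ->
  y = x \/ exists2 x', e x x' & y \in nball e x' n.
Proof.
elim: n y => [|n IH] y /=.
  rewrite in_setU in_set1 => /orP [/eqP ->|]; first by left.
  rewrite inE => /existsP [w /andP [hw ewy]].
  move: hw ewy; rewrite in_set1 => /eqP -> exy.
  by right; exists y => //; rewrite set11.
rewrite in_setU => /orP [/IH [->|[x' h1 h2]]|]; first by left.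
  by right; exists x' => //; rewrite in_setU h2.
rewrite inE => /existsP [w /andP [hw ewy]].
case: (IH _ hw) => [hwx|[x' h1 h2]].
  subst w; right; exists y => //; by rewrite in_setU ball_self.
right; exists x' => //; rewrite in_setU; apply/orP; right.
by rewrite inE; apply/existsP; exists w; rewrite h2.
Qed.

Lemma ball_path x p : path e x p -> last x p \in nball e x (size p).
Proof.
elim: p x => [|x' p IH] x /=; first by rewrite set11.
by move=> /andP [h hp]; apply: ball_cons h (IH _ hp).
Qed.

Lemma hd_le x y n : y \in nball e x n -> hopdist e x y <= n.
Proof.
move=> h; rewrite /hopdist.
case: (ltnP n #|T|) => hn.
  rewrite leqNgt; apply/negP => /(before_find 0).
  by rewrite nth_iota // add0n h.
by apply: leq_trans (find_size _ _) _; rewrite size_iota.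
Qed.

Lemma hd_lt x y : connect e x y -> hopdist e x y < #|T|.
Proof.
case/connectP => p pth ->; case/shortenP: pth => p' pth' uq _.
have := hd_le _ _ _ (ball_path _ _ pth'); move/leq_ltn_trans; apply.
move: (max_card (mem (x :: p'))); by rewrite (card_uniqP uq).
Qed.

Lemma hd_ball x y : connect e x y -> y \in nball e x (hopdist e x y).
Proof.
move=> c; have := hd_lt _ _ c; rewrite /hopdist => h.
have hh : has (fun n => y \in nball e x n) (iota 0 #|T|) by rewrite has_find size_iota.
have := nth_find 0 hh; by rewrite nth_iota ?add0n // -(size_iota 0 #|T|) -has_find.
Qed.

Lemma sum_eq1 (A : {pred T}) x : \sum_(k in A) ((k == x) : nat) <= 1.
Proof.
case hx: (x \in A).
  rewrite (bigD1 x) //= eqxx big1 // => k /andP [_ /negbTE ->] //.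
rewrite big1 // => k hk; case: eqP => // ek; by rewrite -ek hk in hx.
Qed.
End Ball.

Fixpoint G (N : nat) (c : nat -> 'I_N -> 'I_N) (s L : nat) (e : 'I_N) : 'I_N :=
  match L with 0 => e | L'.+1 => c s.-1 (G N c s.-1 L' e) end.
Arguments G {N}.

Lemma cardI (T : finType) (A : {pred T}) : #|A| = \sum_e ((e \in A) : nat).
Proof. rewrite -sum1_card big_mkcond; apply: eq_bigr => e _; by case: (e \in A). Qed.

Theorem lemma4 (N D : nat) (adj : rel 'I_N)
  (o z : 'I_N)                                   (* nodes labelled 0 and D-1 *)
  (dhat : nat -> 'I_N -> nat) (c : nat -> 'I_N -> 'I_N) (a : nat -> 'I_N -> nat)
  (* simple undirected connected graph *)
  (Hsym : symmetric adj) (Hirr : irreflexive adj)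
  (Hconn : forall i j, connect adj i j)
  (* labelling, D *)
  (Ho : val o = 0) (Hz : val z = D.-1) (HDN : D <= N) (HD : 2 < D)
  (Hmax : \max_(i : 'I_N) hopdist adj i o = D.-1)
  (Hpath : forall i j : 'I_N, val j = (val i).+1 -> val j < D -> adj i j)
  (Hpathd : forall i : 'I_N, val i < D -> hopdist adj o i = val i)
  (* initial values: steady state with source set {D-1} *)
  (H0d : forall i, (i = z -> dhat 0 i = 0) /\
     (i <> z -> (exists j, adj i j /\ dhat 0 i = dhat 0 j + 1) /\
                (forall j, adj i j -> dhat 0 i <= dhat 0 j + 1)))
  (H0c : forall i, (i = z -> c 0 i = i) /\
     (i <> z -> adj i (c 0 i) /\ dhat 0 (c 0 i) + 1 = dhat 0 i))
  (H0a : forall i, a 0 i = \sum_(j in childset (c 0) (dhat 0) (dhat 0 i) i) a 0 j + 1)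
  (H0lev : forall m i, i \in level adj z m -> dhat 0 i = m)
  (H0sum : forall m, \sum_(i in level adj z m) a 0 i <= N)
  (* updates for t >= 1, source set {0} *)
  (Hd : forall t i, 1 <= t ->
     (i = o -> dhat t i = 0) /\
     (i <> o -> (exists j, adj i j /\ dhat t i = dhat t.-1 j + 1) /\
                (forall j, adj i j -> dhat t i <= dhat t.-1 j + 1)))
  (Hc : forall t i, 1 <= t ->
     (i = o -> c t i = i) /\
     (i <> o -> adj i (c t i) /\ dhat t.-1 (c t i) + 1 = dhat t i))
  (Ha : forall t i, 1 <= t ->
     a t i = \sum_(j in childset (c t.-1) (dhat t.-1) (dhat t i) i) a t.-1 j + 1)
  : forall t, 1 <= t ->
    let I0 := [set i | hopdist adj i o < t] in
    let I1 := [set i | hopdist adj i z < t] :\: I0 in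
    let I2 := ~: (I0 :|: I1) in
    \sum_(i in I0)
      \sum_(j in childset (c t.-1) (dhat t.-1) (dhat t i) i :&: I2) a t.-1 j <= N.
Proof.
move=> t t1; rewrite [is_true _]/=.
set I0 := [set i | hopdist adj i o < t].
set I1 := [set i | hopdist adj i z < t] :\: I0.
set I2 := ~: (I0 :|: I1).
pose hd := hopdist adj.
have hlt : forall x y, hd x y < N.
  by move=> x y; have := hd_lt _ _ x y (Hconn x y); rewrite card_ord.
have hball : forall x y, y \in nball adj x (hd x y) := fun x y => hd_ball _ _ x y (Hconn x y).
have hle : forall x y n, y \in nball adj x n -> hd x y <= n := hd_le _ adj.
have hself : forall x, hd x x = 0.
  by move=> x; apply/eqP; rewrite -leqn0; apply: hle; apply: ball_self.
have h0 : forall x y, hd x y = 0 -> y = x.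
  by move=> x y h; have := hball x y; rewrite h /= in_set1 => /eqP.
have h5 : forall x x' y, adj x x' -> hd x y <= hd x' y + 1.
  move=> x x' y hax; rewrite addn1; apply: hle; apply: ball_cons hax _; exact: hball.
have h6 : forall x y n, hd x y = n.+1 -> exists2 x', adj x x' & hd x' y = n.
  move=> x y n h; have := hball x y; rewrite h => /ball_decons [eyx|[x' ax hx']].
    by subst y; rewrite hself in h.
  exists x' => //; have := hle _ _ _ hx'; have := h5 _ _ y ax; rewrite h; lia.
have hd0 : forall k, dhat 0 k = hd k z.
  by move=> k; apply: (H0lev (hd k z)); rewrite /level inE.
have St : forall r k, r < hd k o -> r < hd k z -> dhat r k = hd k z.
  elim=> [|r IH] k h1 h2; first exact: hd0.
  have ko : k <> o by move=> ko; subst k; rewrite hself in h1.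
  have [[j [ajk ej]] hall] := (Hd r.+1 k isT).2 ko.
  apply/eqP; rewrite eqn_leq; apply/andP; split.
    have [x' ax hx'] : exists2 x', adj k x' & hd x' z = (hd k z).-1.
      by apply: h6; rewrite prednK //; apply: leq_ltn_trans h2.
    have := h5 _ _ o ax => hxo.
    have := hall x' ax; rewrite /= (IH x'); lia.
  have := h5 _ _ z ajk; have := h5 _ _ o ajk => hjo hjz.
  rewrite ej /= (IH j); lia.
have U : forall r k, 1 <= r -> hd k o < r -> dhat r k <= hd k o.
  elim=> [//|r IH] k _ h.
  case: (eqVneq k o) => [->|/eqP ko]; first by rewrite ((Hd r.+1 o isT).1 erefl).
  have [n ek] : exists n, hd k o = n.+1.
    case ek: (hd k o) => [|n]; last by exists n.
    by move: (h0 _ _ ek) => eo; rewrite eo in ko.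
  have [x' ax hx'] := h6 _ _ _ ek.
  have [_ hall] := (Hd r.+1 k isT).2 ko.
  have := hall x' ax; rewrite /=.
  have := IH x'; rewrite hx' ek; rewrite ek in h.
  have r1 : 1 <= r by lia.
  have nr : n < r by lia.
  move=> /(_ r1 nr); lia.
pose S s j := [set e | (hd j z <= hd e z) && (G c s (hd e z - hd j z) e == j)].
have Sself : forall s j, j \in S s j by move=> s j; rewrite inE leqnn subnn /= eqxx.
have Comb : forall s j (Ch : {set 'I_N}),
    (forall k, k \in Ch -> c s.-1 k = j /\ hd k z = (hd j z).+1) ->
    \sum_(k in Ch) #|S s.-1 k| + 1 <= #|S s j|.
  move=> s j Ch hCh.
  have -> : 1 = \sum_e ((e == j) : nat).
    by rewrite -(cards1 j) cardI; apply: eq_bigr => e _; rewrite in_set1.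
  rewrite cardI.
  under eq_bigr => k _ do rewrite cardI.
  rewrite exchange_big -big_split /=; apply: leq_sum => e _.
  pose x := G c s.-1 (hd e z - (hd j z).+1) e.
  have key : forall k, k \in Ch -> e \in S s.-1 k ->
      [&& e \in S s j, e != j & k == x].
    move=> k hk; have [ck hkz] := hCh k hk.
    rewrite !inE hkz => /andP [le1 /eqP hG].
    have -> : hd e z - hd j z = (hd e z - (hd j z).+1).+1 by lia.
    rewrite /= hG ck eqxx /x hG eqxx andbT.
    have hle' : hd j z <= hd e z by lia.
    rewrite hle' /= ?andbT ?eqb_id; apply/eqP => ej; subst e; lia.
  case hS: ((e \in S s j) && (e != j)).
    move: hS => /andP [-> /negbTE ->]; rewrite addn0.
    apply: leq_trans (sum_eq1 _ (mem Ch) x); apply: leq_sum => k hk.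
    case he: (e \in S s.-1 k) => //.
    by case/and3P: (key k hk he) => _ _ ->.
  rewrite big1; last first.
    move=> k hk; case he: (e \in S s.-1 k) => //.
    by case/and3P: (key k hk he) => h1 h2 _; rewrite h1 h2 in hS.
  rewrite add0n; case: eqP => // ->; by rewrite Sself.
have M0 : forall n j, N - hd j z < n -> a 0 j <= #|S 0 j|.
  elim=> [//|n IH] j hn; rewrite H0a.
  have hCh : forall k, k \in childset (c 0) (dhat 0) (dhat 0 j) j ->
      c 0 k = j /\ hd k z = (hd j z).+1.
    move=> k; rewrite inE => /andP [/eqP -> /eqP]; rewrite !hd0 addn1 => ->.
    by [].
  apply: leq_trans (Comb 0 j _ hCh); rewrite leq_add2r; apply: leq_sum => k hk.
  apply: IH; have [_ hk'] := hCh k hk; have := hlt k z; lia.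
have M : forall s j, s < hd j o -> s < hd j z -> a s j <= #|S s j|.
  elim=> [|r IH] j h1 h2.
    apply: (M0 N.+1); lia.
  rewrite (Ha r.+1 j isT).
  have hCh : forall k, k \in childset (c r) (dhat r) (dhat r.+1 j) j ->
      [/\ c r k = j, r < hd k o, r < hd k z & hd k z = (hd j z).+1].
    move=> k; rewrite inE => /andP [/eqP ck /eqP dk].
    have akj : adj k j.
      case: (posnP r) => [r0|rpos].
        subst r; case: (eqVneq k z) => [kz|/eqP kz].
          by subst k; move: ((H0c z).1 erefl); rewrite ck => jz; rewrite jz hself in h2.
        by rewrite -ck; case: ((H0c k).2 kz).
      case: (eqVneq k o) => [ko|/eqP ko].
        by subst k; move: ((Hc r o rpos).1 erefl); rewrite ck => jo; rewrite jo hself in h1.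
      by rewrite -ck; case: ((Hc r k rpos).2 ko).
    have ajk : adj j k by rewrite Hsym.
    have ho := h5 _ _ o ajk; have hz := h5 _ _ z ajk.
    have r1 : r < hd k o by lia.
    have r2 : r < hd k z by lia.
    split => //.
    by move: dk; rewrite (St r k r1 r2) (St r.+1 j h1 h2) addn1.
  apply: leq_trans (Comb r.+1 j _ _); last first.
    by move=> k hk; case: (hCh k hk).
  rewrite leq_add2r; apply: leq_sum => k hk.
  by case: (hCh k hk) => _ r1 r2 _; apply: IH.
have fin : forall i j, i \in I0 ->
    j \in childset (c t.-1) (dhat t.-1) (dhat t i) i :&: I2 ->
    [/\ hd j z = t, t.-1 < hd j o, t.-1 < hd j z & c t.-1 j = i].
  move=> i j; rewrite /I2 /I1 /I0 !inE => hi /andP [/andP [/eqP cj /eqP dj]].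
  rewrite negb_or => /andP [hjo]; rewrite negb_and hjo /= -leqNgt => hjz.
  rewrite -leqNgt in hjo.
  move: hi hjz hjo; rewrite -/hd => hi hjz hjo.
  have r1 : t.-1 < hd j o by lia.
  have r2 : t.-1 < hd j z by lia.
  have h3 := U t i t1 hi; rewrite (St _ _ r1 r2) in dj; split => //; lia.
apply: (@leq_trans (\sum_(i in I0) \sum_(j in childset (c t.-1) (dhat t.-1) (dhat t i) i :&: I2) #|S t.-1 j|)).
  apply: leq_sum => i hi; apply: leq_sum => j hj.
  by case: (fin i j hi hj) => _ r1 r2 _; apply: M.
under eq_bigr => i _ do under eq_bigr => j _ do rewrite cardI.
under eq_bigr => i _ do rewrite exchange_big.
rewrite exchange_big /=.
apply: (@leq_trans (\sum_(e : 'I_N) 1)); last by rewrite sum1_card card_ord.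
apply: leq_sum => e _.
pose x := G c t.-1 (hd e z - t) e.
have key : forall i j, i \in I0 ->
    j \in childset (c t.-1) (dhat t.-1) (dhat t i) i :&: I2 ->
    e \in S t.-1 j -> (j == x) && (i == c t.-1 x).
  move=> i j hi hj; case: (fin i j hi hj) => hjz _ _ cj.
  rewrite inE hjz => /andP [_ /eqP hG].
  by rewrite /x hG eqxx cj eqxx.
apply: leq_trans (sum_eq1 _ (mem I0) (c t.-1 x)).
apply: leq_sum => i hi.
case hix: (i == c t.-1 x).
  apply: leq_trans (sum_eq1 _ (mem (childset (c t.-1) (dhat t.-1) (dhat t i) i :&: I2)) x).
  apply: leq_sum => j hj; case he: (e \in S t.-1 j) => //.
  by case/andP: (key i j hi hj he) => ->.
rewrite big1 // => j hj; case he: (e \in S t.-1 j) => //.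
by case/andP: (key i j hi hj he) => _; rewrite hix.
Qed.
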